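(* Let $\chi:\mathcal H\to\mathcal H_L^\chi\otimes\mathcal H_R^\chi$ be a splitting map. The set $\mathrm{cons}(\chi)$ of $\chi$-consistent operators is a Von Neumann algebra included in $\mathcal L(\mathcal H_L^\chi)$, and it is the largest Von Neumann algebra $\mathcal A\subseteq\mathcal L(\mathcal H_L^\chi)$ such that the restriction of $\sigma^\chi$ to $\mathcal A$ is a $*$-algebra homomorphism, where $\sigma^\chi:\mathcal L(\mathcal H_L^\chi)\to\mathcal L(\mathcal H)$, $\sigma^\chi(B)=\chi^\dagger(B\otimes\mathbb 1_{\mathcal H_R^\chi})\chi$.
   Context: All Hilbert spaces are finite-dimensional and complex. A Von Neumann algebra on a Hilbert space $\mathcal K$ is a $*$-subalgebra of $\mathcal L(\mathcal K)$ closed under adjoint and containing $\mathbb 1_{\mathcal K}$. A splitting map on $\mathcal H$ is an isometry $\chi:\mathcal H\to\mathcal H_L^\chi\otimes\mathcal H_R^\chi$; $\pi^\chi=\chi\chi^\dagger$. $B\in\mathcal L(\mathcal H_L^\chi)$ is $\chi$-consistent if $\pi^\chi(B\otimes\mathbb 1)=(B\otimes\mathbb 1)\pi^\chi$. *)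

(* Defs.v *)
From mathcomp Require Import all_boot all_order all_algebra.
From mathcomp Require Export mxtens.
Set Implicit Arguments. Unset Strict Implicit. Unset Printing Implicit Defensive.
Import GRing.Theory Num.Theory.
Local Open Scope ring_scope.

(* Finite-dimensional complex Hilbert spaces are modelled as C^n with the
   standard inner product, C a numClosedFieldType (e.g. complex numbers);
   operators are square matrices, maps H -> K are 'M_(dim K, dim H).
   H_L (x) H_R is C^(l*r) with the Kronecker product tensmx (from mxtens). *)

Definition adjmx (C : numClosedFieldType) m n (A : 'M[C]_(m, n)) : 'M[C]_(n, m) :=
  (map_mx Num.conj A)^T.

Definition is_isometry (C : numClosedFieldType) n k (chi : 'M[C]_(k, n)) : Prop :=
  adjmx chi *m chi = 1%:M.

Definition pi_chi (C : numClosedFieldType) n l r (chi : 'M[C]_(l * r, n))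
  : 'M[C]_(l * r) := chi *m adjmx chi.

Definition consistent (C : numClosedFieldType) n l r (chi : 'M[C]_(l * r, n))
  (B : 'M[C]_l) : Prop :=
  pi_chi chi *m (B *t (1%:M : 'M[C]_r)) = (B *t (1%:M : 'M[C]_r)) *m pi_chi chi.

Definition cons_set (C : numClosedFieldType) n l r (chi : 'M[C]_(l * r, n))
  : 'M[C]_l -> Prop := fun B => consistent chi B.

Definition sigma_chi (C : numClosedFieldType) n l r (chi : 'M[C]_(l * r, n))
  (B : 'M[C]_l) : 'M[C]_n :=
  adjmx chi *m (B *t (1%:M : 'M[C]_r)) *m chi.

(* (finite-dimensional) Von Neumann algebra on C^k: a *-subalgebra of L(C^k)
   containing the identity. *)
Definition vN_algebra (C : numClosedFieldType) k (A : 'M[C]_k -> Prop) : Prop :=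
  [/\ A 1%:M,
      (forall (a : C) B, A B -> A (a *: B)),
      (forall B D, A B -> A D -> A (B + D)),
      (forall B D, A B -> A D -> A (B *m D)) &
      (forall B, A B -> A (adjmx B))].

Definition star_hom_on (C : numClosedFieldType) k n (A : 'M[C]_k -> Prop)
  (f : 'M[C]_k -> 'M[C]_n) : Prop :=
  [/\ (forall (a : C) B D, A B -> A D -> f (a *: B + D) = a *: f B + f D),
      (forall B D, A B -> A D -> f (B *m D) = f B *m f D),
      f 1%:M = 1%:M &
      (forall B, A B -> f (adjmx B) = adjmx (f B))].

(* Main.v *)
Require Import Defs.
From mathcomp Require Import all_boot all_order all_algebra.
Import GRing.Theory Num.Theory.
Local Open Scope ring_scope.

Section Aux.
Variable C : numClosedFieldType.

Lemma adjmxM m n p (A : 'M[C]_(m, n)) (B : 'M[C]_(n, p)) :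
  adjmx (A *m B) = adjmx B *m adjmx A.
Proof. by rewrite /adjmx map_mxM trmx_mul. Qed.

Lemma adjmxK m n (A : 'M[C]_(m, n)) : adjmx (adjmx A) = A.
Proof. by apply/matrixP => i j; rewrite !mxE conjCK. Qed.

Lemma adjmx1 m : adjmx (1%:M : 'M[C]_m) = 1%:M.
Proof. by rewrite /adjmx map_mx1 trmx1. Qed.

Lemma adjmxD m n (A B : 'M[C]_(m, n)) : adjmx (A + B) = adjmx A + adjmx B.
Proof. by apply/matrixP => i j; rewrite !mxE rmorphD. Qed.

Lemma adjmxB m n (A B : 'M[C]_(m, n)) : adjmx (A - B) = adjmx A - adjmx B.
Proof. by apply/matrixP => i j; rewrite !mxE rmorphB. Qed.

Lemma adjmxZ m n a (A : 'M[C]_(m, n)) : adjmx (a *: A) = Num.conj a *: adjmx A.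
Proof. by apply/matrixP => i j; rewrite !mxE rmorphM. Qed.

Lemma tens11 l r : (1%:M : 'M[C]_l) *t (1%:M : 'M[C]_r) = 1%:M.
Proof.
apply/matrixP => i j.
case: (mxtens_indexP i) => i0 i1; case: (mxtens_indexP j) => j0 j1.
rewrite tensmxE !mxE (can_eq (@mxtens_indexK _ _)) xpair_eqE.
by case: (i0 == j0); case: (i1 == j1); rewrite /= ?mulr1 ?mulr0 ?mul0r.
Qed.

Lemma tensDl l r (A B : 'M[C]_l) (D : 'M[C]_r) : (A + B) *t D = A *t D + B *t D.
Proof. by apply/matrixP => i j; rewrite !mxE mulrDl. Qed.

Lemma tensZl l r a (A : 'M[C]_l) (D : 'M[C]_r) : (a *: A) *t D = a *: (A *t D).
Proof. by apply/matrixP => i j; rewrite !mxE mulrA. Qed.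

Lemma adjmx_tens l r (B : 'M[C]_l) :
  adjmx (B *t (1%:M : 'M[C]_r)) = adjmx B *t (1%:M : 'M[C]_r).
Proof.
apply/matrixP => i j; rewrite !mxE rmorphM /=; congr (_ * _).
by rewrite conjC_nat eq_sym.
Qed.

Lemma adjmx_eq0 m n (M : 'M[C]_(m, n)) : adjmx M *m M = 0 -> M = 0.
Proof.
move=> H; apply/matrixP => i j.
have := congr1 (fun X : 'M[C]_n => X j j) H; rewrite !mxE => /eqP.
have Hge : forall k : 'I_m, 0 <= (adjmx M) j k * M k j.
  by move=> k; rewrite !mxE mulrC mul_conjC_ge0.
move/eqP/(psumr_eq0P (fun k _ => Hge k)) => /(_ i isT).
by rewrite !mxE mulrC => /eqP; rewrite mul_conjC_eq0 => /eqP.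
Qed.

End Aux.

Theorem mainTheorem7 (C : numClosedFieldType) (n l r : nat)
  (chi : 'M[C]_(l * r, n)) (Hchi : is_isometry chi) :
  [/\ vN_algebra (cons_set chi),
      star_hom_on (cons_set chi) (sigma_chi chi) &
      forall A : 'M[C]_l -> Prop,
        vN_algebra A -> star_hom_on A (sigma_chi chi) ->
        forall B, A B -> cons_set chi B].
Proof.
rewrite /is_isometry in Hchi.
set T := fun B : 'M[C]_l => B *t (1%:M : 'M[C]_r).
have TM : forall B D, T (B *m D) = T B *m T D.
  by move=> B D; rewrite /T tensmx_mul mulmx1.
have Padj : adjmx (pi_chi chi) = pi_chi chi.
  by rewrite /pi_chi adjmxM adjmxK.
have key : forall Tm : 'M[C]_(l * r),
  adjmx chi *m (adjmx Tm *m Tm) *m chi =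
    (adjmx chi *m adjmx Tm *m chi) *m (adjmx chi *m Tm *m chi) ->
  Tm *m pi_chi chi = pi_chi chi *m Tm *m pi_chi chi.
  move=> Tm E.
  set N := Tm *m chi - chi *m (adjmx chi *m Tm *m chi).
  have : adjmx N *m N = 0.
    rewrite /N adjmxB !adjmxM adjmxK mulmxBl !mulmxBr.
    have e1 : adjmx chi *m adjmx Tm *m (Tm *m chi) = adjmx chi *m (adjmx Tm *m Tm) *m chi.
      by rewrite !mulmxA.
    have e2 : adjmx chi *m adjmx Tm *m (chi *m (adjmx chi *m Tm *m chi))
       = (adjmx chi *m adjmx Tm *m chi) *m (adjmx chi *m Tm *m chi).
      by rewrite !mulmxA.
    have e3 : adjmx chi *m (adjmx Tm *m chi) *m adjmx chi *m (Tm *m chi)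
       = (adjmx chi *m adjmx Tm *m chi) *m (adjmx chi *m Tm *m chi).
      by rewrite !mulmxA.
    have e4 : adjmx chi *m (adjmx Tm *m chi) *m adjmx chi *m (chi *m (adjmx chi *m Tm *m chi))
       = (adjmx chi *m adjmx Tm *m chi) *m (adjmx chi *m Tm *m chi).
      by rewrite -(mulmxA _ (adjmx chi) (chi *m _)) (mulmxA (adjmx chi) chi) Hchi mul1mx !mulmxA.
    by rewrite e1 e2 e3 e4 E !subrr.
  move/adjmx_eq0 => /eqP; rewrite /N subr_eq0 => /eqP HN.
  by rewrite /pi_chi !mulmxA HN !mulmxA.
have Tadj : forall B, T (adjmx B) = adjmx (T B).
  by move=> B; rewrite /T adjmx_tens.
have cons_adj : forall B, cons_set chi B -> cons_set chi (adjmx B).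
  move=> B; rewrite /cons_set /consistent -/(T B) -/(T (adjmx B)) Tadj => H.
  by rewrite -{1}Padj -adjmxM -H adjmxM Padj.
have sc : forall B, cons_set chi B ->
    adjmx chi *m T B *m chi *m adjmx chi = adjmx chi *m T B.
  move=> B; rewrite /cons_set /consistent -/(T B) => H.
  rewrite -mulmxA -/(pi_chi chi) -mulmxA -H /pi_chi !mulmxA Hchi mul1mx //.
have slin : forall (a : C) B D,
    sigma_chi chi (a *: B + D) = a *: sigma_chi chi B + sigma_chi chi D.
  move=> a B D; rewrite /sigma_chi tensDl tensZl mulmxDr mulmxDl -scalemxAr (scalemxAl a (adjmx chi *m _) chi) //.
have sadj : forall B, sigma_chi chi (adjmx B) = adjmx (sigma_chi chi B).
  by move=> B; rewrite /sigma_chi !adjmxM adjmxK adjmx_tens mulmxA.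
have s1 : sigma_chi chi 1%:M = 1%:M.
  by rewrite /sigma_chi tens11 mulmx1 Hchi.
split.
- split.
  + by rewrite /cons_set /consistent tens11 mulmx1 mul1mx.
  + move=> a B; rewrite /cons_set /consistent tensZl => H.
    by rewrite -scalemxAr H scalemxAl.
  + move=> B D; rewrite /cons_set /consistent tensDl => H1 H2.
    by rewrite mulmxDr mulmxDl H1 H2.
  + move=> B D; rewrite /cons_set /consistent -/(T B) -/(T D) -/(T (B *m D)) TM => H1 H2.
    by rewrite mulmxA H1 -(mulmxA (T B) (pi_chi chi)) H2 mulmxA.
  + exact: cons_adj.
- split => //.
  move=> B D HB HD; rewrite /sigma_chi -/(T B) -/(T D) -/(T (B *m D)) TM.
  by rewrite !mulmxA (sc B HB).
- move=> A [A1 AZ AD AM AA] [hlin hmul h1 hadj] B HB.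
  have HBa := AA B HB.
  have K1 : T B *m pi_chi chi = pi_chi chi *m T B *m pi_chi chi.
    apply: key.
    have := hmul _ _ HBa HB; rewrite /sigma_chi -/(T B) -/(T (adjmx B)) -/(T (adjmx B *m B)) TM Tadj.
    by rewrite !mulmxA.
  have K2 : T (adjmx B) *m pi_chi chi = pi_chi chi *m T (adjmx B) *m pi_chi chi.
    apply: key.
    have := hmul _ _ HB HBa; rewrite /sigma_chi -/(T B) -/(T (adjmx B)) -/(T (B *m adjmx B)) TM Tadj adjmxK.
    by rewrite !mulmxA.
  have K3 := congr1 (@adjmx C _ _) K2.
  rewrite !adjmxM !adjmxK Tadj adjmxK -/(pi_chi chi) mulmxA in K3.
  by rewrite /cons_set /consistent -/(T B) K3 -K1.
Qed.
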